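(* There exist absolute constants $0<c_1\le c_2$ and $\rho>0$ such that the following holds. Let $k\ge2$ be even and let $\delta\in\mathbb R^{k\times k}$, $\delta\neq0$, satisfy $\sum_{j\in[k]}\delta_{i_0j}=0$ and $\sum_{i\in[k]}\delta_{ij_0}=0$ for all $i_0,j_0\in[k]$. Let $X=(X_1,\dots,X_k)$ and $Y=(Y_1,\dots,Y_k)$ be independent, each uniformly distributed over the binary vectors in $\{0,1\}^k$ of Hamming weight $k/2$, and let $Z=\sum_{(i,j)\in[k]\times[k]}\delta_{ij}X_iY_j$. Then $$\Pr\Big[\frac{Z^2}{\|\delta\|_F^2}\in[c_1,c_2]\Big]\ge\rho .$$
   Context: $\|\delta\|_F^2=\sum_{i,j}\delta_{ij}^2$ is the squared Frobenius norm. *)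

(* Defs.v *)
From HB Require Import structures.
From mathcomp Require Import all_boot all_order all_algebra.
Set Implicit Arguments. Unset Strict Implicit. Unset Printing Implicit Defensive.
Import Order.TTheory GRing.Theory Num.Theory.
Local Open Scope ring_scope.

Definition bvec (k : nat) := {ffun 'I_k -> bool}.

Definition half_weight (k : nat) : {set bvec k} :=
  [set x : bvec k | #|[set i | x i]| == k %/ 2]%N.

Definition Zval (R : ringType) (k : nat) (delta : 'M[R]_k) (x y : bvec k) : R :=
  \sum_(i < k) \sum_(j < k) delta i j * (x i)%:R * (y j)%:R.

Definition frob2 (R : ringType) (k : nat) (delta : 'M[R]_k) : R :=
  \sum_(i < k) \sum_(j < k) delta i j ^+ 2.

Definition prob_uniform_pair (R : numFieldType) (k : nat)
    (P : bvec k -> bvec k -> bool) : R :=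
  (#|[set p : bvec k * bvec k |
       [&& p.1 \in half_weight k, p.2 \in half_weight k & P p.1 p.2]]|%:R)
  / (#|half_weight k| ^ 2)%:R.

(* Main.v *)
Require Import Defs.
From HB Require Import structures.
From mathcomp Require Import all_boot all_order all_algebra.
From mathcomp Require Import all_fingroup.
From mathcomp Require Import ring lra zify.
Set Implicit Arguments. Unset Strict Implicit. Unset Printing Implicit Defensive.
Import Order.TTheory GRing.Theory Num.Theory.
Local Open Scope ring_scope.

Section K.
Variable R : realFieldType.

Definition sg (b : bool) : R := if b then 1 else -1.
Lemma sg2 b : sg b ^+ 2 = 1. Proof. by case: b; rewrite /sg ?sqrrN expr1n. Qed.

Lemma CS (I : finType) (a b : I -> R) :
  (\sum_i a i * b i) ^+ 2 <= (\sum_i a i ^+ 2) * (\sum_i b i ^+ 2).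
Proof.
have hb : 0 <= \sum_i b i ^+ 2 by apply: sumr_ge0 => i _; exact: sqr_ge0.
case: (eqVneq (\sum_i b i ^+ 2) 0) => [b0|bn0].
  have bz i : b i = 0.
    apply/eqP; rewrite -sqrf_eq0; apply/eqP.
    exact: (psumr_eq0P (fun i _ => sqr_ge0 (b i)) b0).
  rewrite b0 mulr0 (eq_bigr (fun _ => 0)) ?big1 // ?expr0n //.
  by move=> i _; rewrite bz mulr0.
set B := \sum_i b i ^+ 2; set C := \sum_i a i * b i; set A := \sum_i a i ^+ 2.
set t := C / B.
have h : 0 <= \sum_i (a i - t * b i) ^+ 2 by apply: sumr_ge0 => i _; exact: sqr_ge0.
have e : \sum_i (a i - t * b i) ^+ 2 = A - 2 * t * C + t ^+ 2 * B.
  rewrite /A /C /B mulr_sumr mulr_sumr -sumrB -big_split /=.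
  by apply: eq_bigr => i _; ring.
rewrite e in h.
have Bp : 0 < B by rewrite lt_neqAle eq_sym bn0 hb.
have : 0 <= (A - 2 * t * C + t ^+ 2 * B) * B by apply: mulr_ge0 => //; exact: ltW.
have -> : (A - 2 * t * C + t ^+ 2 * B) * B = A * B - C ^+ 2.
  rewrite /t; field; exact: bn0.
by rewrite subr_ge0.
Qed.

End K.


Section K2.
Variable R : realFieldType.

Definition fcons p (b : bool) (e : {ffun 'I_p -> bool}) : {ffun 'I_p.+1 -> bool} :=
  [ffun i : 'I_p.+1 => if unlift ord0 i is Some j then e j else b].

Lemma fcons0 p b e : @fcons p b e ord0 = b.
Proof. by rewrite ffunE unlift_none. Qed.
Lemma fconsS p b e j : @fcons p b e (lift ord0 j) = e j.
Proof. by rewrite ffunE liftK. Qed.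

Lemma sum_ffunS p (F : {ffun 'I_p.+1 -> bool} -> R) :
  \sum_e F e = \sum_(b : bool) \sum_(e : {ffun 'I_p -> bool}) F (fcons b e).
Proof.
rewrite pair_big /=.
pose h (u : bool * {ffun 'I_p -> bool}) := fcons u.1 u.2.
pose g (e : {ffun 'I_p.+1 -> bool}) := (e ord0, [ffun j => e (lift ord0 j)]).
rewrite (reindex h) //=.
exists g => [[b e]|e] _; rewrite /g /h /=.
  by rewrite fcons0; congr pair; apply/ffunP => j; rewrite ffunE fconsS.
apply/ffunP => i; rewrite ffunE /=.
case: unliftP => [j ->|->]; by rewrite ?ffunE.
Qed.

Lemma khin2 p (I : finType) (v : 'I_p -> I -> R) :
  \sum_(e : {ffun 'I_p -> bool}) \sum_i (\sum_n sg R (e n) * v n i) ^+ 2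
  = (2 ^ p)%:R * \sum_n \sum_i v n i ^+ 2.
Proof.
elim: p v => [|p IH] v.
  rewrite big_ord0 mulr0; apply: big1 => e _; apply: big1 => i _.
  by rewrite big_ord0 expr0n.
have hS b e i : \sum_(n < p.+1) sg R (fcons b e n) * v n i
    = sg R b * v ord0 i + \sum_(n < p) sg R (e n) * v (lift ord0 n) i.
  by rewrite big_ord_recl fcons0; congr (_ + _); apply: eq_bigr => n _; rewrite fconsS.
rewrite sum_ffunS.
under eq_bigr => b _ do under eq_bigr => e _ do under eq_bigr => i _ do rewrite hS.
rewrite big_bool /=.
rewrite -big_split /=.
under eq_bigr => e _ do rewrite -big_split /=.
set S := fun e i => \sum_(n < p) sg R (e n) * v (lift ord0 n) i.
have -> : \sum_(e : {ffun 'I_p -> bool}) \sum_i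
   ((sg R true * v ord0 i + S e i) ^+ 2 + (sg R false * v ord0 i + S e i) ^+ 2)
   = \sum_(e : {ffun 'I_p -> bool}) (2 * \sum_i v ord0 i ^+ 2 + 2 * \sum_i S e i ^+ 2).
  apply: eq_bigr => e _; rewrite !mulr_sumr -big_split /=.
  by apply: eq_bigr => i _; rewrite /sg; ring.
rewrite big_split /= -mulr_sumr -mulr_sumr IH /= sumr_const card_ffun card_bool card_ord.
rewrite big_ord_recl expnS natrM -mulr_natr.
set T := \sum_(i < p) _; set C := \sum_i v ord0 i ^+ 2.
rewrite mulr_natr. ring.
Qed.


Lemma khin4 p (I : finType) (v : 'I_p -> I -> R) :
  \sum_(e : {ffun 'I_p -> bool}) (\sum_i (\sum_n sg R (e n) * v n i) ^+ 2) ^+ 2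
  <= (2 ^ p)%:R * 3 * (\sum_n \sum_i v n i ^+ 2) ^+ 2.
Proof.
elim: p v => [|p IH] v.
  rewrite big1 ?big_ord0 ?expr0n ?mulr0 // => e _.
  by rewrite big1 ?expr0n // => i _; rewrite big_ord0 expr0n.
have hS b e i : \sum_(n < p.+1) sg R (fcons b e n) * v n i
    = sg R b * v ord0 i + \sum_(n < p) sg R (e n) * v (lift ord0 n) i.
  by rewrite big_ord_recl fcons0; congr (_ + _); apply: eq_bigr => n _; rewrite fconsS.
rewrite sum_ffunS.
under eq_bigr => b _ do under eq_bigr => e _ do under eq_bigr => i _ do rewrite hS.
rewrite big_bool /= -big_split /=.
set S := fun e i => \sum_(n < p) sg R (e n) * v (lift ord0 n) i.
set C := \sum_i v ord0 i ^+ 2.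
set A := fun e => \sum_i S e i ^+ 2.
have step e : (\sum_i (sg R true * v ord0 i + S e i) ^+ 2) ^+ 2 +
   (\sum_i (sg R false * v ord0 i + S e i) ^+ 2) ^+ 2
   <= 2 * A e ^+ 2 + 12 * C * A e + 2 * C ^+ 2.
  set B := \sum_i v ord0 i * S e i.
  have hB : B ^+ 2 <= C * A e by apply: CS.
  have e1 : \sum_i (sg R true * v ord0 i + S e i) ^+ 2 = C + 2 * B + A e.
    rewrite /C /B /A mulr_sumr -!big_split /=; apply: eq_bigr => i _; rewrite /sg; ring.
  have e2 : \sum_i (sg R false * v ord0 i + S e i) ^+ 2 = C - 2 * B + A e.
    rewrite /C /B /A mulr_sumr -sumrB -!big_split /=; apply: eq_bigr => i _; rewrite /sg; ring.
  rewrite e1 e2; nra.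
apply: le_trans; first by apply: ler_sum => e _; exact: step.
rewrite big_split big_split /= -!mulr_sumr sumr_const card_ffun card_bool card_ord.
have h2 := khin2 (fun n i => v (lift ord0 n) i).
have h4 := IH (fun n i => v (lift ord0 n) i).
rewrite -/S in h2 h4.
rewrite -/A in h2.
set T := \sum_(n < p) \sum_i v (lift ord0 n) i ^+ 2.
rewrite -/T in h2 h4.
rewrite h2 big_ord_recl -/C -/T expnS natrM.
have T0 : 0 <= T by apply: sumr_ge0 => n _; apply: sumr_ge0 => i _; exact: sqr_ge0.
have C0 : 0 <= C by apply: sumr_ge0 => i _; exact: sqr_ge0.
have P0 : 0 < (2 ^ p)%:R :> R by rewrite ltr0n expn_gt0.
set Q := (2 ^ p)%:R in P0 h4 *.
rewrite -mulr_natr.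
have hA : \sum_(e : {ffun 'I_p -> bool}) A e ^+ 2 <= Q * 3 * T ^+ 2 by exact: h4.
nra.
Qed.

End K2.


Section S.
Variable R : realFieldType.
Variable k : nat.

Definition act (x : bvec k) (s : {perm 'I_k}) : bvec k := [ffun i => x (s i)].

Lemma act_mul x s t : act (act x t) s = act x (s * t)%g.
Proof. by apply/ffunP => i; rewrite !ffunE permM. Qed.

Lemma act1 x : act x 1%g = x.
Proof. by apply/ffunP => i; rewrite !ffunE perm1. Qed.

Lemma card_act x s : #|[set i | act x s i]| = #|[set i | x i]|.
Proof.
have -> : [set i | act x s i] = s @^-1: [set i | x i].
  by apply/setP => i; rewrite !inE ffunE.
exact: card_preimset (@perm_inj _ s).
Qed.

Lemma act_in x s : (act x s \in half_weight k) = (x \in half_weight k).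
Proof. by rewrite !inE card_act. Qed.

Lemma sum_act (f : bvec k -> R) s :
  \sum_(x in half_weight k) f (act x s) = \sum_(x in half_weight k) f x.
Proof.
rewrite [RHS](reindex (act^~ s)) /=.
  by apply: eq_bigl => x; rewrite act_in.
exists (act^~ s^-1)%g => x _; by rewrite act_mul ?mulVg ?mulgV act1.
Qed.


Lemma trans_act x y : x \in half_weight k -> y \in half_weight k ->
  exists s, y = act x s.
Proof.
move=> hx hy.
move: {2}#|[set i | x i != y i]| (leqnn #|[set i | x i != y i]|) => n.
elim: n x hx => [|n IH] x hx hn.
  move: hn; rewrite leqn0 => /eqP/cards0_eq E.
  exists 1%g; rewrite act1; apply/ffunP => i.
  case: (eqVneq (x i) (y i)) => // hi.
  have : i \in [set i | x i != y i] by rewrite inE hi.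
  by rewrite E inE.
case: (eqVneq x y) => [->|nxy]; first by exists 1%g; rewrite act1.
have cA : #|[set i | y i]| = #|[set i | x i]|.
  by move: hx hy; rewrite !inE => /eqP -> /eqP ->.
have [i hi] : exists i, y i && ~~ x i.
  case/boolP: [exists i, y i && ~~ x i] => [/existsP//|]; rewrite negb_exists => /forallP H.
  have sub : [set i | y i] \subset [set i | x i].
    by apply/subsetP => i; rewrite !inE => yi; move: (H i); rewrite yi /= negbK.
  move/(subset_cardP cA): sub => eqs; case/eqP: nxy; apply/ffunP => i.
  by move: (eqs i); rewrite !inE; case: (x i); case: (y i).
have [j hj] : exists j, x j && ~~ y j.
  case/boolP: [exists i, x i && ~~ y i] => [/existsP//|]; rewrite negb_exists => /forallP H.
  have sub : [set i | x i] \subset [set i | y i].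
    by apply/subsetP => l; rewrite !inE => yi; move: (H l); rewrite yi /= negbK.
  move/(subset_cardP (esym cA)): sub => eqs; case/eqP: nxy; apply/ffunP => l.
  by move: (eqs l); rewrite !inE; case: (x l); case: (y l).
move/andP: hi => [yi nxi]; move/andP: hj => [xj nyj].
have ij : i != j by apply/eqP => e; move: nxi; rewrite e xj.
set x' := act x (tperm i j).
have hx' : x' \in half_weight k by rewrite act_in.
have sub : [set l | x' l != y l] \proper [set l | x l != y l].
  apply/properP; split.
    apply/subsetP => l; rewrite !inE /x' ffunE.
    case: tpermP => [->|->|/eqP li /eqP lj]; last by [].
      by rewrite xj yi.
    by rewrite (negbTE nxi) (negbTE nyj).
  exists i; rewrite !inE ?yi ?(negbTE nxi) //.
  by rewrite /x' ffunE tpermL xj.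
have := proper_card sub => lt.
have [s ->] := IH x' hx' (leq_trans (leq_trans lt hn) (leqnn _)) .
  by exists (s * tperm i j)%g; rewrite act_mul.
Qed.


Lemma phi_const (f : bvec k -> R) x1 x : x1 \in half_weight k -> x \in half_weight k ->
  \sum_(s : {perm 'I_k}) f (act x s) = \sum_(s : {perm 'I_k}) f (act x1 s).
Proof.
move=> h1 h; have [r ->] := trans_act h1 h.
under eq_bigr => s _ do rewrite act_mul.
by rewrite [RHS](reindex_inj (mulIg r)).
Qed.

Lemma couple (f : bvec k -> R) x1 : x1 \in half_weight k ->
  #|{perm 'I_k}|%:R * \sum_(x in half_weight k) f x
  = #|half_weight k|%:R * \sum_(s : {perm 'I_k}) f (act x1 s).
Proof.
move=> h1.
have e1 : \sum_(x in half_weight k) \sum_(s : {perm 'I_k}) f (act x s)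
   = #|half_weight k|%:R * \sum_(s : {perm 'I_k}) f (act x1 s).
  rewrite (eq_bigr (fun _ => \sum_(s : {perm 'I_k}) f (act x1 s))).
    by rewrite sumr_const mulr_natl.
  by move=> x hx; apply: phi_const.
rewrite -e1 exchange_big /=.
under [RHS]eq_bigr => s _ do rewrite sum_act.
by rewrite sumr_const mulr_natl.
Qed.

End S.


Section N.
Variable R : realFieldType.
Variable k : nat.
Hypothesis k2 : (2 <= k)%N.
Hypothesis ke : ~~ odd k.

Lemma sumsg x : x \in half_weight k -> \sum_b sg R (x b) = 0.
Proof.
rewrite inE => /eqP hx.
rewrite (bigID (fun b => x b)) /=.
have -> : \sum_(b | x b) sg R (x b) = \sum_(b | x b) 1.
  by apply: eq_bigr => b hb; rewrite hb.
have -> : \sum_(b | ~~ x b) sg R (x b) = \sum_(b | ~~ x b) -1.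
  by apply: eq_bigr => b hb; rewrite (negbTE hb).
rewrite !sumr_const.
have c1 : #|[pred b | x b]| = (k %/ 2)%N by rewrite -hx cardsE.
have c2 : #|[pred b | ~~ x b]| = (k - k %/ 2)%N.
  have h := cardC [pred b | x b]; rewrite card_ord in h.
  have e2 : #|[pred b | ~~ x b]| = #|[predC [pred b | x b]]| by apply: eq_card.
  move: h; rewrite c1 e2; lia.
have e : (k - k %/ 2 = k %/ 2)%N.
  by move: (even_halfK ke); rewrite divn2 -addnn; lia.
rewrite e in c2.
rewrite c1 c2 mulNrn subrr //.
Qed.


Definition Nab (a b : 'I_k) := \sum_(x in half_weight k) sg R (x a) * sg R (x b).

Lemma Nab_sym a b b' : a != b -> a != b' -> Nab a b = Nab a b'.
Proof.
move=> ab ab'; rewrite /Nab -(sum_act _ (tperm b b')).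
apply: eq_bigr => x _; rewrite !ffunE tpermL tpermD //; by rewrite eq_sym.
Qed.

Lemma Naa a : Nab a a = #|half_weight k|%:R.
Proof.
rewrite /Nab (eq_bigr (fun _ => 1)) ?sumr_const //.
by move=> x _; rewrite -expr2 sg2.
Qed.

Lemma Nab_off a b : a != b -> Nab a b = - #|half_weight k|%:R / (k.-1)%:R.
Proof.
move=> ab.
have h0 : \sum_b Nab a b = 0.
  rewrite /Nab exchange_big /= big1 // => x hx.
  by rewrite -mulr_sumr sumsg ?mulr0.
rewrite (bigD1 a) //= Naa in h0.
rewrite (eq_bigr (fun _ => Nab a b)) in h0; last first.
  by move=> c ca; apply: Nab_sym => //; rewrite eq_sym.
rewrite sumr_const in h0.
have ck : #|[pred i | i != a]| = k.-1.
  by have := cardC1 a; rewrite card_ord => <-; apply: eq_card.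
rewrite ck -[Nab a b *+ _]mulr_natr in h0.
have kp : (k.-1)%:R != 0 :> R by rewrite pnatr_eq0 -lt0n; lia.
rewrite -[LHS](mulfK kp); congr (_ / _).
by apply/eqP; rewrite -addr_eq0 addrC h0.
Qed.


Definition alpha : R := 1 + ((k.-1)%:R)^-1.

Lemma quad (w : 'I_k -> R) : \sum_i w i = 0 ->
  \sum_(x in half_weight k) (\sum_i w i * sg R (x i)) ^+ 2
  = #|half_weight k|%:R * alpha * \sum_i w i ^+ 2.
Proof.
move=> w0.
have e1 x : (\sum_i w i * sg R (x i)) ^+ 2
    = \sum_i \sum_j (w i * w j) * (sg R (x i) * sg R (x j)).
  rewrite expr2 mulr_suml; apply: eq_bigr => i _; rewrite mulr_sumr.
  by apply: eq_bigr => j _; ring.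
under eq_bigr => x _ do rewrite e1.
rewrite exchange_big /=.
rewrite mulr_sumr; apply: eq_bigr => i _.
rewrite exchange_big /=.
under eq_bigr => j _ do rewrite -mulr_sumr.
rewrite (bigD1 i) //= -/(Nab i i) Naa.
have -> : \sum_(j | j != i) w i * w j * \sum_(x in half_weight k) sg R (x i) * sg R (x j)
   = \sum_(j | j != i) w i * w j * (- #|half_weight k|%:R / (k.-1)%:R).
  by apply: eq_bigr => j ji; rewrite -/(Nab i j) Nab_off // eq_sym.
rewrite -mulr_suml -mulr_sumr.
have -> : \sum_(j | j != i) w j = - w i.
  by move: w0; rewrite (bigD1 i) //= => /eqP; rewrite addrC addr_eq0 => /eqP.
rewrite /alpha; field.
have kp : (k.-1)%:R != 0 :> R by rewrite pnatr_eq0 -lt0n; lia.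
exact: kp.
Qed.


Definition W0 (d : 'M[R]_k) (x y : bvec k) :=
  \sum_i \sum_j d i j * sg R (x i) * sg R (y j).

Lemma M2 (d : 'M[R]_k) :
  (forall i0 : 'I_k, \sum_(j < k) d i0 j = 0) ->
  (forall j0 : 'I_k, \sum_(i < k) d i j0 = 0) ->
  \sum_(x in half_weight k) \sum_(y in half_weight k) W0 d x y ^+ 2
  = (#|half_weight k|%:R * alpha) ^+ 2 * frob2 d.
Proof.
move=> hr hc.
have e1 x y : W0 d x y = \sum_j (\sum_i d i j * sg R (x i)) * sg R (y j).
  rewrite /W0 exchange_big /=; apply: eq_bigr => j _; rewrite mulr_suml.
  by apply: eq_bigr => i _.
have e2 x : \sum_(y in half_weight k) W0 d x y ^+ 2
   = #|half_weight k|%:R * alpha * \sum_j (\sum_i d i j * sg R (x i)) ^+ 2.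
  under eq_bigr => y _ do rewrite e1.
  apply: quad; rewrite exchange_big /= big1 // => i _.
  by rewrite -mulr_suml hr mul0r.
under eq_bigr => x _ do rewrite e2.
rewrite -mulr_sumr exchange_big /=.
have e3 j : \sum_(x in half_weight k) (\sum_i d i j * sg R (x i)) ^+ 2
   = #|half_weight k|%:R * alpha * \sum_i d i j ^+ 2.
  by apply: quad; apply: hc.
under eq_bigr => j _ do rewrite e3.
rewrite -mulr_sumr /frob2 [X in _ = _ * X]exchange_big /=.
by rewrite mulrA expr2.
Qed.

End N.


Section C.
Variable R : realFieldType.
Variable p : nat.
Local Notation k := (p + p)%N.

Definition xe (e : {ffun 'I_p -> bool}) : bvec k :=
  [ffun i => match split i with inl a => e a | inr a => ~~ e a end].

Lemma split_l (a : 'I_p) : split (lshift p a) = inl a.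
Proof. exact: (unsplitK (inl a)). Qed.
Lemma split_r (a : 'I_p) : split (rshift p a) = inr a.
Proof. exact: (unsplitK (inr a)). Qed.

Lemma xe_l e a : xe e (lshift p a) = e a.
Proof. by rewrite ffunE split_l. Qed.
Lemma xe_r e a : xe e (rshift p a) = ~~ e a.
Proof. by rewrite ffunE split_r. Qed.

Lemma xe_in e : xe e \in half_weight k.
Proof.
rewrite inE -sum1_card big_mkcond /= big_split_ord /=.
rewrite (eq_bigr (fun a => nat_of_bool (e a))); last by move=> a _; rewrite inE xe_l; case: (e a).
rewrite [X in (_ + X)%N](eq_bigr (fun a => nat_of_bool (~~ e a))); last first.
  by move=> a _; rewrite inE xe_r; case: (e a).
rewrite -big_split /= (eq_bigr (fun _ => 1%N)); last by move=> a _; case: (e a).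
by rewrite sum1_card card_ord addnn divn2 doubleK.
Qed.


Variable d : 'M[R]_k.

Definition Dm (s t : {perm 'I_k}) (i j : 'I_k) := d (s^-1 i)%g (t^-1 j)%g.

Definition Am s t (a b : 'I_p) :=
  Dm s t (lshift p a) (lshift p b) - Dm s t (lshift p a) (rshift p b)
  - Dm s t (rshift p a) (lshift p b) + Dm s t (rshift p a) (rshift p b).

Lemma W0_couple s t e f :
  W0 d (act (xe e) s) (act (xe f) t)
  = \sum_a \sum_b sg R (e a) * sg R (f b) * Am s t a b.
Proof.
rewrite /W0 (reindex_inj (@perm_inj _ s^-1%g)) /=.
under eq_bigr => i _ do rewrite (reindex_inj (@perm_inj _ t^-1%g)) /=.
have hx i : act (xe e) s (s^-1%g i) = xe e i by rewrite ffunE permKV.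
have hy j : act (xe f) t (t^-1%g j) = xe f j by rewrite ffunE permKV.
under eq_bigr => i _ do under eq_bigr => j _ do rewrite hx hy.
rewrite big_split_ord /=.
under eq_bigr => a _ do rewrite big_split_ord /= xe_l.
under [X in _ + X]eq_bigr => a _ do rewrite big_split_ord /= xe_r.
rewrite -big_split /=; apply: eq_bigr => a _.
rewrite -!big_split /=; apply: eq_bigr => b _.
rewrite !xe_l !xe_r /Am /Dm /sg.
by case: (e a); case: (f b) => /=; ring.
Qed.

Lemma frob_Dm s t : \sum_i \sum_j Dm s t i j ^+ 2 = frob2 d.
Proof.
rewrite /frob2 [RHS](reindex_inj (@perm_inj _ s^-1%g)) /=.
apply: eq_bigr => i _.
by rewrite [RHS](reindex_inj (@perm_inj _ t^-1%g)).
Qed.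

Lemma ineq4 (x1 x2 x3 x4 : R) :
  (x1 - x2 - x3 + x4) ^+ 2 <= 4 * (x1 ^+ 2 + x2 ^+ 2 + (x3 ^+ 2 + x4 ^+ 2)).
Proof.
have := sqr_ge0 (x1 + x2); have := sqr_ge0 (x1 + x3); have := sqr_ge0 (x1 - x4);
have := sqr_ge0 (x2 - x3); have := sqr_ge0 (x2 + x4); have := sqr_ge0 (x3 + x4).
nra.
Qed.

Lemma frob_Am s t : \sum_a \sum_b Am s t a b ^+ 2 <= 4 * frob2 d.
Proof.
rewrite -(frob_Dm s t) big_split_ord /= mulrDr.
under [X in _ <= _ * X + _]eq_bigr => i _ do rewrite big_split_ord /=.
under [X in _ <= _ + _ * X]eq_bigr => i _ do rewrite big_split_ord /=.
rewrite -!mulrDr -big_split /= mulr_sumr.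
apply: ler_sum => a _.
rewrite -!big_split /= mulr_sumr.
apply: ler_sum => b _.
rewrite /Am; apply: ineq4.
Qed.


Lemma bil4 (A : 'I_p -> 'I_p -> R) :
  \sum_(e : {ffun 'I_p -> bool}) \sum_(f : {ffun 'I_p -> bool})
     (\sum_a \sum_b sg R (e a) * sg R (f b) * A a b) ^+ 4
  <= (2 ^ p)%:R * 3 * ((2 ^ p)%:R * 3 * (\sum_a \sum_b A a b ^+ 2) ^+ 2).
Proof.
rewrite exchange_big /=.
have step (f : {ffun 'I_p -> bool}) :
  \sum_(e : {ffun 'I_p -> bool}) (\sum_a \sum_b sg R (e a) * sg R (f b) * A a b) ^+ 4
  <= (2 ^ p)%:R * 3 * (\sum_a (\sum_b sg R (f b) * A a b) ^+ 2) ^+ 2.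
  have := khin4 (fun (a : 'I_p) (i : 'I_1) => \sum_b sg R (f b) * A a b).
  under eq_bigr => e _ do rewrite big_ord1.
  under [X in _ <= _ * X ^+ 2 -> _]eq_bigr => a _ do rewrite big_ord1.
  apply: le_trans; apply: ler_sum => e _.
  rewrite -exprM /= le_eqVlt; apply/orP; left; apply/eqP; congr (_ ^+ _).
  apply: eq_bigr => a _; rewrite mulr_sumr; apply: eq_bigr => b _; ring.
apply: le_trans; first by apply: ler_sum => f _; exact: step.
rewrite -mulr_sumr ler_pM2l ?mulr_gt0 ?ltr0n ?expn_gt0 //.
have := khin4 (fun (b : 'I_p) (a : 'I_p) => A a b).
by rewrite [X in _ <= _ * X ^+ 2 -> _]exchange_big.
Qed.


Lemma coupleQ (g : bvec k -> R) :
  #|{perm 'I_k}|%:R * (2 ^ p)%:R * \sum_(x in half_weight k) g x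
  = #|half_weight k|%:R *
    \sum_(e : {ffun 'I_p -> bool}) \sum_(s : {perm 'I_k}) g (act (xe e) s).
Proof.
rewrite [RHS]mulr_sumr.
under [RHS]eq_bigr => e _ do rewrite -(couple g (xe_in e)).
rewrite sumr_const card_ffun card_bool card_ord -mulr_natr; ring.
Qed.

Lemma M4 :
  \sum_(x in half_weight k) \sum_(y in half_weight k) W0 d x y ^+ 4
  <= #|half_weight k|%:R ^+ 2 * (144 * frob2 d ^+ 2).
Proof.
set P : R := #|{perm 'I_k}|%:R; set Q : R := (2 ^ p)%:R; set n : R := #|half_weight k|%:R.
have P0 : 0 < P by rewrite ltr0n; apply/card_gt0P; exists 1%g.
have Q0 : 0 < Q by rewrite ltr0n expn_gt0.
have F0 : 0 <= frob2 d.
  by apply: sumr_ge0 => i _; apply: sumr_ge0 => j _; exact: sqr_ge0.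
have e1 : (P * Q) ^+ 2 *
   (\sum_(x in half_weight k) \sum_(y in half_weight k) W0 d x y ^+ 4)
   = n ^+ 2 * \sum_(s : {perm 'I_k}) \sum_(t : {perm 'I_k})
       \sum_(e : {ffun 'I_p -> bool}) \sum_(f : {ffun 'I_p -> bool})
          W0 d (act (xe e) s) (act (xe f) t) ^+ 4.
  rewrite expr2 -mulrA coupleQ mulrCA.
  have -> : P * Q * (\sum_(e : {ffun 'I_p -> bool}) \sum_(s : {perm 'I_k})
        \sum_(y in half_weight k) W0 d (act (xe e) s) y ^+ 4)
     = n * \sum_(e : {ffun 'I_p -> bool}) \sum_(s : {perm 'I_k})
        \sum_(f : {ffun 'I_p -> bool}) \sum_(t : {perm 'I_k})
          W0 d (act (xe e) s) (act (xe f) t) ^+ 4.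
    rewrite !mulr_sumr; apply: eq_bigr => e _; rewrite !mulr_sumr; apply: eq_bigr => s _.
    by rewrite coupleQ.
  rewrite mulrA -expr2; congr (_ * _).
  rewrite exchange_big /=; apply: eq_bigr => s _.
  rewrite [RHS]exchange_big /=; apply: eq_bigr => e _.
  by rewrite exchange_big.
have e2 : \sum_(s : {perm 'I_k}) \sum_(t : {perm 'I_k})
       \sum_(e : {ffun 'I_p -> bool}) \sum_(f : {ffun 'I_p -> bool})
          W0 d (act (xe e) s) (act (xe f) t) ^+ 4
   <= \sum_(s : {perm 'I_k}) \sum_(t : {perm 'I_k}) (Q ^+ 2 * (144 * frob2 d ^+ 2)).
  apply: ler_sum => s _; apply: ler_sum => t _.
  under eq_bigr => e _ do under eq_bigr => f _ do rewrite W0_couple.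
  apply: le_trans; first exact: bil4.
  have h := frob_Am s t.
  have h0 : 0 <= \sum_a \sum_b Am s t a b ^+ 2.
    by apply: sumr_ge0 => a _; apply: sumr_ge0 => b _; exact: sqr_ge0.
  rewrite -/Q.
  have : (\sum_a \sum_b Am s t a b ^+ 2) ^+ 2 <= 16 * frob2 d ^+ 2 by nra.
  move=> h2; have QQ : 0 <= Q * Q by nra.
  nra.
have sc (c : R) : \sum_(s : {perm 'I_k}) c = P * c.
  by rewrite sumr_const -mulr_natl.
rewrite sc sc in e2.
set X := \sum_(s : {perm 'I_k}) _ in e1 e2.
set SS := \sum_(x in half_weight k) _ in e1 *.
have PQ0 : 0 < (P * Q) ^+ 2 by rewrite exprn_gt0 // mulr_gt0.
rewrite -(ler_pM2l PQ0) e1.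
have n0 : 0 <= n ^+ 2 by exact: sqr_ge0.
have : n ^+ 2 * X <= n ^+ 2 * (P * (P * (Q ^+ 2 * (144 * frob2 d ^+ 2)))).
  exact: ler_wpM2l.
move=> h; apply: (le_trans h); rewrite le_eqVlt; apply/orP; left; apply/eqP; ring.
Qed.


End C.


Section M.
Variable R : realFieldType.

Lemma cond (F w : R) : 0 < F ->
  ((64%:R)^-1 <= (w / 4) ^+ 2 / F) && ((w / 4) ^+ 2 / F <= 36%:R)
  = (F / 4 <= w ^+ 2) && (w ^+ 2 <= 576 * F).
Proof.
move=> F0; rewrite (ler_pdivlMr _ _ F0) (ler_pdivrMr _ _ F0).
have -> : (w / 4) ^+ 2 = w ^+ 2 / 16 by rewrite expr_div_n -natrX.
set u := w ^+ 2.
by apply/idP/idP => /andP[h1 h2]; apply/andP; split; lra.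
Qed.

Lemma point (F w : R) : 0 < F -> 0 <= w ->
  w <= F / 4 + w ^+ 2 / (576 * F) + 144 * F * ((F / 4 <= w) && (w <= 576 * F))%:R.
Proof.
move=> F0 w0.
have h : w ^+ 2 / (576 * F) + 144 * F - w = (w - 288 * F) ^+ 2 / (576 * F).
  by field; lra.
have hq : 0 <= (w - 288 * F) ^+ 2 / (576 * F).
  by apply: divr_ge0; [exact: sqr_ge0 | lra].
have hp : 0 <= w ^+ 2 / (576 * F) by apply: divr_ge0; [exact: sqr_ge0 | lra].
case: (leP (F / 4) w) => h1 /=; last by rewrite mulr0; lra.
case: (leP w (576 * F)) => h2 /=; first by rewrite mulr1; lra.
rewrite mulr0 addr0.
have : 576 * F * w <= w ^+ 2 by rewrite expr2; apply: ler_wpM2r; lra.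
move=> h3.
have : w <= w ^+ 2 / (576 * F).
  by rewrite ler_pdivlMr; [lra|lra].
lra.
Qed.

Lemma Zval_W0 k (d : 'M[R]_k) x y :
  (forall i0 : 'I_k, \sum_(j < k) d i0 j = 0) ->
  (forall j0 : 'I_k, \sum_(i < k) d i j0 = 0) ->
  Zval d x y = W0 d x y / 4.
Proof.
move=> hr hc.
have e i j : d i j * (x i)%:R * (y j)%:R
   = (d i j + d i j * sg R (x i) + d i j * sg R (y j) + d i j * sg R (x i) * sg R (y j)) / 4.
  by rewrite /sg; case: (x i); case: (y j) => /=; field.
rewrite /Zval /W0.
under eq_bigr => i _ do under eq_bigr => j _ do rewrite e.
under eq_bigr => i _ do rewrite -mulr_suml. rewrite -mulr_suml.
congr (_ / _).
have s1 : \sum_i \sum_j d i j = 0 by rewrite big1 // => i _; exact: hr.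
have s2 : \sum_i \sum_j d i j * sg R (x i) = 0.
  by rewrite big1 // => i _; rewrite -mulr_suml hr mul0r.
have s3 : \sum_i \sum_j d i j * sg R (y j) = 0.
  by rewrite exchange_big big1 //= => j _; rewrite -mulr_suml hc mul0r.
under eq_bigr => i _ do rewrite !big_split /=.
by rewrite !big_split /= s1 s2 s3 !add0r.
Qed.



End M.


Lemma frob_pos (R : realFieldType) k (d : 'M[R]_k) : d != 0 -> 0 < frob2 d.
Proof.
move=> dn.
have F0 : 0 <= frob2 d.
  by apply: sumr_ge0 => i _; apply: sumr_ge0 => j _; exact: sqr_ge0.
rewrite lt_neqAle F0 andbT; apply/eqP => F00; case/eqP: dn.
apply/matrixP => i j; rewrite mxE.
have g1 i0 : true -> 0 <= \sum_j d i0 j ^+ 2.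
  by move=> _; apply: sumr_ge0 => j0 _; exact: sqr_ge0.
have h1 := psumr_eq0P g1 (esym F00).
have g2 j0 : true -> 0 <= d i j0 ^+ 2 by move=> _; exact: sqr_ge0.
have := psumr_eq0P g2 (h1 i isT) (i := j) isT.
by move/eqP; rewrite sqrf_eq0 => /eqP.
Qed.

Lemma count_sum (R : realFieldType) k (P : bvec k -> bvec k -> bool) :
  (#|[set p : bvec k * bvec k |
       [&& p.1 \in half_weight k, p.2 \in half_weight k & P p.1 p.2]]|%:R : R)
  = \sum_(x in half_weight k) \sum_(y in half_weight k) (P x y)%:R.
Proof.
set A := [set p : bvec k * bvec k | _].
rewrite -sumr_const big_mkcond /=.
have -> : \sum_(p : bvec k * bvec k) (if p \in A then (1:R) else 0)
   = \sum_(x : bvec k) \sum_(y : bvec k) (if (x, y) \in A then (1:R) else 0).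
  by rewrite pair_big /=; apply: eq_big => // -[x y].
rewrite [RHS]big_mkcond /=; apply: eq_bigr => x _.
case hx : (x \in half_weight k).
  rewrite [RHS]big_mkcond /=; apply: eq_bigr => y _.
  by rewrite inE /= hx; case: (y \in _); case: (P x y).
by rewrite big1 // => y _; rewrite inE /= hx.
Qed.

Lemma r1 (R : realFieldType) (n : nat) : ratr ((n%:R)^-1 : rat) = (n%:R : R)^-1.
Proof. by rewrite fmorphV rmorph_nat. Qed.
Lemma r0 (R : realFieldType) (n : nat) : ratr (n%:R : rat) = (n%:R : R).
Proof. by rewrite rmorph_nat. Qed.

Lemma prob_sum (R : realFieldType) k (P : bvec k -> bvec k -> bool) :
  prob_uniform_pair R P
  = (\sum_(x in half_weight k) \sum_(y in half_weight k) (P x y)%:R)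
    / (#|half_weight k|%:R ^+ 2).
Proof.
rewrite /prob_uniform_pair natrX; congr (_ / _).
exact: count_sum.
Qed.

Theorem theorem6p6 :
  exists c1 c2 rho : rat,
    [/\ 0 < c1, c1 <= c2 & 0 < rho] /\
    forall (R : realFieldType) (k : nat) (delta : 'M[R]_k),
      (2 <= k)%N -> ~~ odd k -> delta != 0 ->
      (forall i0 : 'I_k, \sum_(j < k) delta i0 j = 0) ->
      (forall j0 : 'I_k, \sum_(i < k) delta i j0 = 0) ->
      ratr rho <= prob_uniform_pair R
        (fun x y => (ratr c1 <= Zval delta x y ^+ 2 / frob2 delta)
                    && (Zval delta x y ^+ 2 / frob2 delta <= ratr c2)).
Proof.
exists (64%:R)^-1, 36%:R, (576%:R)^-1; split; first by split; lra.
move=> R k d k2 ke dn hr hc.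
have [p ep] : exists p, k = (p + p)%N by exists k./2; rewrite addnn even_halfK.
subst k.
have F0 := frob_pos dn.
set F := frob2 d in F0 *.
rewrite prob_sum.
rewrite (r1 R 576) (r1 R 64) (r0 R 36).
under eq_bigr => x _ do under eq_bigr => y _ do rewrite Zval_W0 // cond //.
set n : R := #|half_weight (p + p)|%:R.
have n0 : 0 < n.
  rewrite ltr0n; apply/card_gt0P; exists (xe [ffun=> true]); exact: xe_in.
set cnt := \sum_(x in _) _.
have hM2 := M2 k2 ke hr hc.
have hM4 : \sum_(x in half_weight (p + p)) \sum_(y in half_weight (p + p)) W0 d x y ^+ 4
           <= n ^+ 2 * (144 * F ^+ 2) by exact: M4.
have al : 1 <= alpha R (p + p).
  by rewrite /alpha lerDl invr_ge0 ler0n.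
have hlow : n ^+ 2 * F <= \sum_(x in half_weight (p + p)) \sum_(y in half_weight (p + p)) W0 d x y ^+ 2.
  rewrite hM2 -/n -/F; apply: ler_wpM2r; first exact: ltW.
  rewrite lerXn2r ?nnegrE ?mulr_ge0 ?ler_pMr //; try exact: ltW.
  by apply: le_trans al; rewrite ler01.
have hpt x y : W0 d x y ^+ 2 <= F / 4 + W0 d x y ^+ 4 / (576 * F)
     + 144 * F * ((F / 4 <= W0 d x y ^+ 2) && (W0 d x y ^+ 2 <= 576 * F))%:R.
  by rewrite -[4%N]/(2 * 2)%N exprM; apply: point => //; exact: sqr_ge0.
have esum : \sum_(x in half_weight (p + p)) \sum_(y in half_weight (p + p))
     (F / 4 + W0 d x y ^+ 4 / (576 * F)
      + 144 * F * ((F / 4 <= W0 d x y ^+ 2) && (W0 d x y ^+ 2 <= 576 * F))%:R)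
   = n ^+ 2 * (F / 4) + (\sum_(x in half_weight (p + p)) \sum_(y in half_weight (p + p)) W0 d x y ^+ 4) / (576 * F) + 144 * F * cnt.
  under eq_bigr => x _ do rewrite !big_split /= -!mulr_suml -!mulr_sumr sumr_const.
  rewrite !big_split /= -!mulr_suml -!mulr_sumr sumr_const.
  rewrite -/n; congr (_ + _ + _).
  rewrite -[_ *+ #|half_weight _|]mulr_natr -[F *+ _]mulr_natr -/n; ring.
have hsum : \sum_(x in half_weight (p + p)) \sum_(y in half_weight (p + p)) W0 d x y ^+ 2
   <= n ^+ 2 * (F / 4) + (\sum_(x in half_weight (p + p)) \sum_(y in half_weight (p + p)) W0 d x y ^+ 4) / (576 * F) + 144 * F * cnt.
  by rewrite -esum; apply: ler_sum => x _; apply: ler_sum => y _; exact: hpt.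
have h4 : (\sum_(x in half_weight (p + p)) \sum_(y in half_weight (p + p)) W0 d x y ^+ 4) / (576 * F)
   <= n ^+ 2 * F / 4.
  rewrite ler_pdivrMr; last by rewrite mulr_gt0 // ltr0n.
  apply: (le_trans hM4); rewrite le_eqVlt; apply/orP; left; apply/eqP; field; done.
have n2 : 0 < n ^+ 2 by rewrite exprn_gt0.

rewrite (ler_pdivlMr _ _ n2).
have hc0 : n ^+ 2 * F / 4 <= 144 * F * cnt.
  have h5 := le_trans hlow hsum.
  move: h4 h5; set Y := _ / (576 * F); set N := n ^+ 2.
  set C := 144 * F * cnt.
  have -> : N * (F / 4) = N * F / 4 by rewrite mulrA.
  have NF0 : 0 <= N * F by apply: mulr_ge0; apply: ltW.
  have aux : forall Y NF C : R, 0 <= NF -> Y <= NF / 4 -> NF <= NF / 4 + Y + C -> NF / 4 <= C.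
    by move=> *; lra.
  exact: aux.
have : n ^+ 2 / 576 <= cnt.
  rewrite -(ler_pM2l (_ : 0 < 144 * F)); last by rewrite mulr_gt0 // ltr0n.
  have e5 : 144 * F * (n ^+ 2 / 576) = n ^+ 2 * F / 4 by field.
  by rewrite e5.
by rewrite mulrC.
Qed.
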